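(* Let $\mathcal{X}$ be an arbitrary (unknown) distribution over passwords and let $pwd^1,\ldots,pwd^N$ be $N$ independent samples from $\mathcal{X}$ (the users' passwords). Let $pwd_1,pwd_2,\ldots$ be the distinct passwords appearing in the sample, with $f_i$ the number of samples equal to $pwd_i$, sorted so that $f_i\ge f_{i+1}$. Let $k>0$ be the cost of one password guess, $V>0$ the value of a cracked password, $L>0$, and $j\ge 1$ an integer. If $\frac{V}{k}\ge NL$ and $a=1$, then a rational adversary will crack at least \[ \sum_{i: f_i\geq j} f_i - \frac{N}{(j-1)!\,L^{j-1}} \] of the $N$ user passwords, in expectation (over the draw of the $N$ samples).
   Context: Attacker model: an offline attacker who knows the true distribution $\mathcal{X}$ (but not which password a given user chose) guesses passwords in decreasing order of true probability $q_1\ge q_2\ge\cdots$, each guess costing $k$. For threshold $t$ (guessing the $t$ most likely passwords) the expected reward is $R(t)=V\,(\sum_{m=1}^t q_m)^a$ with $a=1$ here (no diminishing returns), and the marginal cost of the $t$-th guess is $MC(t)=k(1-\sum_{m=1}^{t-1}q_m)$; the marginal revenue is $MR(t)=V q_t$. A rational adversary continues guessing as long as marginal revenue is at least marginal cost and stops otherwise. A user password is cracked if it is among the attacker's guesses. *)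

(* Defs.v *)
From HB Require Import structures.
From mathcomp Require Import all_boot all_order all_algebra.
From mathcomp Require Import all_classical all_reals all_analysis.
Set Implicit Arguments. Unset Strict Implicit. Unset Printing Implicit Defensive.
Import Order.TTheory GRing.Theory Num.Theory.
Local Open Scope ring_scope.
Local Open Scope classical_set_scope.

(* Passwords are labelled by nat, in the attacker's guessing order:
   password m is the (m+1)-th guess, and q m is its true probability
   (q is assumed nonincreasing in the theorem). *)

(* Marginal revenue of guess number m (0-based), with a = 1. *)
Definition MR (R : realType) (V : R) (q : nat -> R) (m : nat) : R := V * q m.

Definition MC (R : realType) (k : R) (q : nat -> R) (m : nat) : R :=
  k * (1 - \sum_(i < m) q i).

(* A rational adversary keeps guessing while MR >= MC and stops at the first
   guess where MR < MC: password m is guessed (cracked) iff every guess up to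
   and including m satisfies MR >= MC. *)
Definition cracked (R : realType) (k V : R) (q : nat -> R) (m : nat) : Prop :=
  forall s, (s <= m)%N -> MC k q s <= MR V q s.

Definition sample (N : nat) := {ffun 'I_N -> nat}.

Definition freq (N : nat) (x : sample N) (p : nat) : nat :=
  #|[set i : 'I_N | x i == p]|.

Definition distinct_pwds (N : nat) (x : sample N) : seq nat :=
  undup [seq x i | i <- enum 'I_N].

Definition freq_mass (j N : nat) (x : sample N) : nat :=
  \sum_(p <- distinct_pwds x | (j <= freq x p)%N) freq x p.

Definition cracked_count (R : realType) (k V : R) (q : nat -> R) (N : nat)
  (x : sample N) : nat :=
  #|[set i : 'I_N | `[< cracked k V q (x i) >] ]|.

Definition expect (R : realType) (q : nat -> R) (N : nat) (g : sample N -> nat)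
  : \bar R :=
  \esum_(x in [set: sample N]) ((\prod_(i < N) q (x i)) * (g x)%:R)%:E.

(* Main.v *)
Require Import Defs.
From HB Require Import structures.
From mathcomp Require Import all_boot all_order all_algebra.
From mathcomp Require Import all_classical all_reals all_analysis.
From mathcomp Require Import ring lra.
Import Order.TTheory GRing.Theory Num.Theory.
Set Implicit Arguments. Unset Strict Implicit.
Local Open Scope ring_scope.

Lemma prod_ind (R : realType) (q : nat -> R) N M (T : {set 'I_N}) (p : 'I_M) :
  (forall m, 0 <= q m) -> \sum_(m < M) q m <= 1 ->
  \sum_(y : {ffun 'I_N -> 'I_M}) (\prod_(i < N) q (y i)) * ([forall l in T, y l == p] : bool)%:R
  <= q p ^+ #|T|.
Proof.
move=> q0 q1.
pose h (i : 'I_N) (m : 'I_M) : R := q m * (if i \in T then (m == p)%:R else 1).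
have -> : \sum_(y : {ffun 'I_N -> 'I_M}) (\prod_(i < N) q (y i)) * ([forall l in T, y l == p] : bool)%:R
   = \sum_(y : {ffun 'I_N -> 'I_M}) \prod_(i < N) h i (y i).
  apply: eq_bigr => y _; rewrite /h big_split /=; congr (_ * _).
  case: forallP => [Hall|Hn].
    rewrite big1 // => i _; case: ifP => // iT.
    by move: (Hall i); rewrite iT /= => /eqP ->; rewrite eqxx.
  have [l] : exists l, ~~ ((l \in T) ==> (y l == p)).
    by apply/existsP; rewrite -negb_forall; apply/forallP.
  rewrite negb_imply => /andP[lT ylp].
  by rewrite (bigD1 l) //= lT (negPf ylp) mul0r.
rewrite -bigA_distr_bigA /=.
rewrite -prodr_const [X in _ <= X]big_mkcond /=.
apply: ler_prod => i _; apply/andP; split.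
  by apply: sumr_ge0 => m _; rewrite /h mulr_ge0 //; case: ifP => _ //; rewrite ler0n.
rewrite /h; case: ifP => iT.
  rewrite (bigD1 p) //= eqxx mulr1 big1 ?addr0 // => m /negPf ->.
  by rewrite mulr0.
by under eq_bigr do rewrite mulr1.
Qed.

Lemma f_le_bin f j : (1 <= j)%N -> (j <= f)%N -> (f <= j * 'C(f, j))%N.
Proof.
case: j => // m _ mf; rewrite -mul_bin_diag leq_pmulr // bin_gt0.
by case: f mf.
Qed.

Lemma sum_card N (P : pred 'I_N) : (\sum_(l < N) P l)%N = #|[set l | P l]|.
Proof.
by rewrite -sum1_card [RHS]big_mkcond; apply: eq_bigr => l _; rewrite inE; case: (P l).
Qed.

Lemma key_nat N M j (y : {ffun 'I_N -> 'I_M}) (U : pred nat) : (1 <= j)%N ->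
  (\sum_(i < N) (U (y i) && (j <= \sum_(l < N) (y l == y i)))%N <=
  j * \sum_(p : 'I_M | U p) \sum_(T : {set 'I_N} | #|T| == j) [forall l in T, y l == p])%N.
Proof.
move=> j1.
rewrite (partition_big y (fun _ => true)) //= big_distrr /= [X in (_ <= X)%N]big_mkcond /=.
apply: leq_sum => p _.
set A := [set l | y l == p].
have E : (\sum_(T : {set 'I_N} | #|T| == j) [forall l in T, y l == p])%N = 'C(#|A|, j).
  rewrite -cards_draws -sum1_card [RHS]big_mkcond [LHS]big_mkcond /=.
  apply: eq_bigr => T _; rewrite inE.
  have -> : [forall l in T, y l == p] = (T \subset A).
    apply/forallP/fintype.subsetP => H l.
      by move=> lT; rewrite inE; exact: (implyP (H l) lT).
    by apply/implyP => /H; rewrite inE.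
  by case: (T \subset A); case: (#|T| == j).
rewrite E.
have -> : (\sum_(i | y i == p) (U (y i) && (j <= \sum_(l < N) (y l == y i))))%N
   = (\sum_(i in A) (U p && (j <= #|A|)))%N.
  apply: eq_big => i; first by rewrite inE.
  move=> /eqP ->; congr (_ && (j <= _)%N); exact: sum_card.
rewrite sum_nat_const.
case: (U p) => //=; case jA: (j <= #|A|)%N; rewrite ?muln0 ?muln1 //.
exact: f_le_bin.
Qed.

Lemma sum_card_gen (T : finType) (P : pred T) : (\sum_(l : T) P l)%N = #|[set l | P l]|.
Proof.
by rewrite -sum1_card [RHS]big_mkcond; apply: eq_bigr => l _; rewrite inE; case: (P l).
Qed.

Lemma fin_bound (R : realType) (q : nat -> R) N M j (c : R) (U : pred nat) :
  (forall m, 0 <= q m) -> \sum_(m < M) q m <= 1 -> (1 <= j)%N -> 0 <= c ->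
  (forall p, U p -> j%:R * 'C(N, j)%:R * q p ^+ j <= q p * c) ->
  \sum_(y : {ffun 'I_N -> 'I_M}) (\prod_(i < N) q (y i)) *
     (\sum_(i < N) (U (y i) && (j <= \sum_(l < N) (y l == y i))))%N%:R <= c.
Proof.
move=> q0 q1 j1 c0 Hp.
have P0 : forall y : {ffun 'I_N -> 'I_M}, 0 <= \prod_(i < N) q (y i).
  by move=> y; apply: prodr_ge0 => i _.
apply: (@le_trans _ _ (\sum_(y : {ffun 'I_N -> 'I_M}) (\prod_(i < N) q (y i)) *
   (j * \sum_(p : 'I_M | U p) \sum_(T : {set 'I_N} | #|T| == j) [forall l in T, y l == p])%N%:R)).
  apply: ler_sum => y _; apply: ler_wpM2l => //; rewrite ler_nat; exact: key_nat.
have -> : \sum_(y : {ffun 'I_N -> 'I_M}) (\prod_(i < N) q (y i)) *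
   (j * \sum_(p : 'I_M | U p) \sum_(T : {set 'I_N} | #|T| == j) [forall l in T, y l == p])%N%:R
   = j%:R * \sum_(p : 'I_M | U p) \sum_(T : {set 'I_N} | #|T| == j)
        \sum_(y : {ffun 'I_N -> 'I_M}) (\prod_(i < N) q (y i)) * ([forall l in T, y l == p] : bool)%:R.
  under [in RHS]eq_bigr do rewrite exchange_big /=.
  rewrite [in RHS]exchange_big /= mulr_sumr; apply: eq_bigr => y _.
  rewrite natrM mulrCA; congr (_ * _).
  rewrite natr_sum mulr_sumr; apply: eq_bigr => p _.
  by rewrite natr_sum mulr_sumr.
have HT : forall x : R, \sum_(T : {set 'I_N} | #|T| == j) x = x * 'C(N, j)%:R.
  move=> x; rewrite (sumr_const (fun T : {set 'I_N} => #|T| == j)).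
  by rewrite -cardsE card_draws card_ord mulr_natr.
apply: (@le_trans _ _ (j%:R * \sum_(p : 'I_M | U p) q p ^+ j * 'C(N, j)%:R)).
  apply: ler_wpM2l; first by rewrite ler0n.
  apply: ler_sum => p _; rewrite -HT; apply: ler_sum => T /eqP <-.
  exact: prod_ind.
rewrite mulr_sumr.
apply: (@le_trans _ _ (\sum_(p : 'I_M | U p) q p * c)).
  apply: ler_sum => p Up; rewrite (mulrC (q p ^+ j)) mulrA; exact: Hp.
apply: (@le_trans _ _ (\sum_(p : 'I_M) q p * c)).
  rewrite [X in _ <= X](bigID (fun p : 'I_M => U p)) /= lerDl; apply: sumr_ge0 => p _; exact: mulr_ge0.
by rewrite -mulr_suml -[X in _ <= X]mul1r ler_wpM2r.
Qed.

Lemma ffact_le_exp n m : (n ^_ m <= n ^ m)%N.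
Proof.
rewrite ffact_prod (@leq_trans (\prod_(i < m) n)) //.
  by apply: leq_prod => i _; exact: leq_subr.
by rewrite prod_nat_const card_ord.
Qed.

Lemma arith (R : realType) N j (L qp : R) : (1 <= j)%N -> 0 < L -> 0 <= qp ->
  qp * (N%:R * L) <= 1 ->
  j%:R * 'C(N, j)%:R * qp ^+ j <= qp * (N%:R / ((j.-1)`!%:R * L ^+ j.-1)).
Proof.
case: j => // m _ L0 q0 qL /=.
have hn : (m.+1 * 'C(N, m.+1) * m`! <= N * N ^ m)%N.
  rewrite mul_bin_left -mulnA bin_ffact; apply: leq_mul; first exact: leq_subr.
  exact: ffact_le_exp.
have D0 : 0 < m`!%:R * L ^+ m by rewrite mulr_gt0 ?ltr0n ?fact_gt0 ?exprn_gt0.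
rewrite mulrA ler_pdivlMr //.
have -> : m.+1%:R * 'C(N, m.+1)%:R * qp ^+ m.+1 * (m`!%:R * L ^+ m)
   = (m.+1 * 'C(N, m.+1) * m`!)%N%:R * (qp * (qp * L) ^+ m).
  rewrite !natrM exprMn exprS; ring.
apply: (@le_trans _ _ ((N * N ^ m)%N%:R * (qp * (qp * L) ^+ m))).
  by apply: ler_wpM2r; rewrite ?ler_nat // mulr_ge0 // exprn_ge0 // mulr_ge0 // ltW.
have -> : (N * N ^ m)%N%:R * (qp * (qp * L) ^+ m) = qp * N%:R * (qp * (N%:R * L)) ^+ m.
  rewrite natrM natrX !exprMn; ring.
rewrite -[X in _ <= X]mulr1; apply: ler_wpM2l; first by rewrite mulr_ge0.
by apply: exprn_ile1 => //; rewrite mulr_ge0 // mulr_ge0 // ltW.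
Qed.
Local Close Scope ring_scope.
Local Open Scope classical_set_scope.

Lemma freq_count N (x : sample N) p :
  freq x p = count_mem p [seq x i | i <- enum 'I_N].
Proof.
rewrite /freq count_map cardE /enum_mem size_filter.
rewrite (@eq_filter _ _ predT) ?filter_predT //; apply: eq_count => i; apply/idP/idP; rewrite in_setE /=; by []. 
Qed.

Lemma fm_card N j (x : sample N) :
  freq_mass j x = #|[set i | j <= freq x (x i)]|.
Proof.
rewrite /freq_mass /distinct_pwds -sum1_card.
rewrite (eq_bigl (fun i => j <= freq x (x i))); last by move=> i; apply/idP/idP; rewrite in_setE.
have -> : \sum_(i | j <= freq x (x i)) 1 = \sum_(i <- enum 'I_N | j <= freq x (x i)) 1 by rewrite big_enum_cond.
rewrite -(big_map x (fun p => j <= freq x p) (fun _ => 1)).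
rewrite -[in RHS]big_undup_iterop_count; apply: eq_bigr => p _.
by rewrite Monoid.iteropE iter_addn_0 mul1n freq_count.
Qed.

Lemma card_cset N (P : 'I_N -> Prop) :
  #|in_set [set i | P i]| = \sum_(i < N) `[< P i >].
Proof.
rewrite -sum1_card big_mkcond /=; apply: eq_bigr => i _.
case: ifPn => [/set_mem Pi|Hn]; case: asboolP => // Pi; by rewrite mem_set in Hn.
Qed.

Definition bad (R : realType) (k V : R) (q : nat -> R) (j N : nat) (x : sample N) : nat :=
  \sum_(i < N) (~~ `[< cracked k V q (x i) >] && (j <= freq x (x i))).

Lemma fm_le (R : realType) (k V : R) (q : nat -> R) j N (x : sample N) :
  freq_mass j x <= cracked_count k V q x + bad k V q j x.
Proof.
rewrite fm_card /cracked_count /bad !card_cset -big_split /=.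
apply: leq_sum => i _; rewrite asboolb.
rewrite asboolb; by case: (`[< cracked k V q (x i) >]); case: (j <= _).
Qed.

Local Open Scope ring_scope.
Local Open Scope classical_set_scope.

Lemma qmono (R : realType) (q : nat -> R) : (forall m, q m.+1 <= q m) ->
  forall s p, (s <= p)%N -> q p <= q s.
Proof.
move=> qd s p sp; rewrite -(subnKC sp); elim: (p - s)%N => [|d IH]; first by rewrite addn0.
by rewrite addnS; apply: le_trans IH.
Qed.

Lemma uncr (R : realType) (q : nat -> R) (k V L : R) N p :
  (forall m, 0 <= q m) -> (forall m, q m.+1 <= q m) -> 0 < k -> 0 < V -> 0 < L ->
  N%:R * L <= V / k -> ~ cracked k V q p -> q p * (N%:R * L) <= 1.
Proof.
move=> q0 qd k0 V0 L0 NL Hnc.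
have [s sp hs] : exists2 s, (s <= p)%N & MR V q s < MC k q s.
  case: (pselect (exists2 s, (s <= p)%N & MR V q s < MC k q s)) => // H.
  exfalso; apply: Hnc => s sp; rewrite leNgt; apply/negP => lt; apply: H; by exists s.
move: hs; rewrite /MR /MC => hs.
have hk : V * q s < k.
  apply: (lt_le_trans hs).
  have HS : 0 <= \sum_(i < s) q i by apply: sumr_ge0.
  have := mulr_ge0 (ltW k0) HS; rewrite mulrBr mulr1; lra.
apply: (@le_trans _ _ (q s * (V / k))).
  apply: ler_pM => //; first by rewrite mulr_ge0 // ltW.
  exact: qmono.
rewrite mulrA ler_pdivrMr // mul1r mulrC; exact: ltW.
Qed.

Lemma sumq_le1 (R : realType) (q : nat -> R) :
  (forall m, 0 <= q m) -> (\esum_(m in [set: nat]) (q m)%:E = 1)%E ->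
  forall M, \sum_(m < M) q m <= 1.
Proof.
move=> q0 H1 M; rewrite -lee_fin -sumEFin -(big_mkord xpredT (fun m => (q m)%:E)).
rewrite -H1 -nneseries_esumT; last by move=> n; rewrite lee_fin.
by apply: nneseries_lim_ge => n _ _; rewrite lee_fin.
Qed.

Lemma trunc (R : realType) N (s : seq (sample N)) (F : sample N -> R) :
  uniq s -> (forall x, 0 <= F x) ->
  exists M, \sum_(x <- s) F x <=
     \sum_(y : {ffun 'I_N -> 'I_M}) F [ffun i => nat_of_ord (y i)].
Proof.
move=> us F0.
pose M := ((\max_(x <- s) \max_(i < N) x i)%N).+1.
exists M.
have xM : forall x, x \in s -> forall i, (x i < M)%N.
  move=> x xs i; rewrite ltnS.
  apply: (@leq_trans (\max_(i < N) x i)%N); last first.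
  by rewrite (big_rem x xs) /= leq_maxl. by apply: leq_bigmax.
pose g (x : sample N) : {ffun 'I_N -> 'I_M} := [ffun i => inord (x i)].
have ge : forall x, x \in s -> [ffun i => nat_of_ord (g x i)] = x.
  by move=> x xs; apply/ffunP => i; rewrite !ffunE inordK // xM.
rewrite (eq_big_seq (fun x => F [ffun i => nat_of_ord (g x i)])); last first.
  by move=> x xs; rewrite ge.
rewrite -(big_map g xpredT (fun y => F [ffun i => nat_of_ord (y i)])).
have u : uniq (map g s).
  rewrite map_inj_in_uniq // => x1 x2 h1 h2 e.
  by rewrite -(ge x1 h1) -(ge x2 h2) e.
rewrite big_uniq //= [X in _ <= X](bigID (mem (map g s))) /= lerDl.
by apply: sumr_ge0.
Qed.

Lemma w_ge0 (R : realType) (q : nat -> R) N (x : sample N) :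
  (forall m, 0 <= q m) -> 0 <= \prod_(i < N) q (x i).
Proof. by move=> q0; apply: prodr_ge0. Qed.

Lemma E_split (R : realType) (q : nat -> R) (k V : R) N j :
  (forall m, 0 <= q m) ->
  (expect q (fun x : sample N => freq_mass j x) <=
   expect q (fun x : sample N => cracked_count k V q x) +
   expect q (fun x : sample N => bad k V q j x))%E.
Proof.
move=> q0; rewrite /expect -esumD; last 2 first.
- by move=> x _; rewrite lee_fin mulr_ge0 ?w_ge0.
- by move=> x _; rewrite lee_fin mulr_ge0 ?w_ge0.
apply: le_esum => x _; rewrite -EFinD lee_fin -mulrDr -natrD.
by apply: ler_wpM2l; [exact: w_ge0 | rewrite ler_nat fm_le].
Qed.

Lemma bad_emb (R : realType) (k V : R) (q : nat -> R) j N M (y : {ffun 'I_N -> 'I_M}) :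
  bad k V q j [ffun i => nat_of_ord (y i)] =
  (\sum_(i < N) ((fun p : nat => ~~ `[< cracked k V q p >]) (y i) &&
     (j <= \sum_(l < N) (y l == y i))))%N.
Proof.
rewrite /bad; apply: eq_bigr => i _; rewrite ffunE /freq card_cset.
congr (_ && (j <= _)%N); apply: eq_bigr => l _; by rewrite ffunE asboolb.
Qed.

Lemma E_bad (R : realType) (q : nat -> R) (N j : nat) (k V L : R) :
  (forall m, 0 <= q m) ->
  (\esum_(m in [set: nat]) (q m)%:E = 1)%E ->
  (forall m, q m.+1 <= q m) ->
  0 < k -> 0 < V -> 0 < L -> (1 <= j)%N ->
  N%:R * L <= V / k ->
  (expect q (fun x : sample N => bad k V q j x)
     <= (N%:R / ((j.-1)`!%:R * L ^+ j.-1))%:E)%E.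
Proof.
move=> q0 q1 qd k0 V0 L0 j1 NL.
set c := N%:R / _.
have c0 : 0 <= c by rewrite /c divr_ge0 // mulr_ge0 // exprn_ge0 // ltW.
rewrite /expect /esum; apply: ge_ereal_sup => _ [X [finX _] <-].
rewrite fsbig_finite //= sumEFin lee_fin.
have [M HM] := @trunc R N _
  (fun x : sample N => (\prod_(i < N) q (x i)) * (bad k V q j x)%:R)
  (finmap.fset_uniq (fset_set X)) (fun x => mulr_ge0 (w_ge0 x q0) (ler0n _ _)).
apply: le_trans HM _.
under eq_bigr => y _ do rewrite bad_emb.
under eq_bigr => y _ do under eq_bigr => i _ do rewrite ffunE.
apply: (@fin_bound R q N M j c (fun p => ~~ `[< cracked k V q p >])) => //.
  exact: sumq_le1.
move=> p Up; apply: arith => //.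
apply: (uncr q0 qd k0 V0 L0 NL).
by move: Up => /negP; apply: contra_not => H; apply/asboolP.
Qed.

Theorem theorem2 (R : realType) (q : nat -> R) (N j : nat) (k V L : R) :
  (forall m, 0 <= q m) ->
  (\esum_(m in [set: nat]) (q m)%:E = 1)%E ->
  (forall m, q m.+1 <= q m) ->
  0 < k -> 0 < V -> 0 < L -> (1 <= j)%N ->
  N%:R * L <= V / k ->
  (expect q (fun x : sample N => freq_mass j x)
     - (N%:R / ((j.-1)`!%:R * L ^+ j.-1))%:E
   <= expect q (fun x : sample N => cracked_count k V q x))%E.
Proof.
move=> q0 q1 qd k0 V0 L0 j1 NL.
rewrite leeBlDr //.
apply: le_trans (E_split k V N j q0) _.
apply: leeD2l; exact: E_bad.
Qed.
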